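(* Let $p$ be an odd prime, $q=p^m$, $q=et+1$ with integers $e\geq 2,t\geq 1$, $R_{e,q}=\mathbb{F}_q[u]/\langle u^e-1\rangle$, and let $\varphi:R_{e,q}^n\to\mathbb{F}_q^{en}$ be the Gray map defined by a matrix $M\in GL_e(\mathbb{F}_q)$ with $MM^T=\gamma I_e$, $\gamma\in\mathbb{F}_q^*$ (see context). Let $\mathcal{C}$ be a linear code of length $n$ over $R_{e,q}$ with $|\mathcal{C}|=q^{ek}$ and Gray distance $d_G$. Then: (1) $\varphi(\mathcal{C})$ is an $[en,ek,d_H]$ linear code over $\mathbb{F}_q$ with $d_H=d_G$; (2) $\varphi(\mathcal{C}^\perp)=(\varphi(\mathcal{C}))^\perp$; (3) if $\mathcal{C}$ is (Euclidean) self-orthogonal then $\varphi(\mathcal{C})$ is a (Euclidean) self-orthogonal linear code of length $en$ over $\mathbb{F}_q$; (4) $\varphi(\mathcal{C})$ is self-dual if and only if $\mathcal{C}$ is self-dual.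
   Context: Write $u^e-1=\prod_{i=1}^e(u-\alpha_i)$ over $\mathbb{F}_q$, $G_i=u-\alpha_i$, $\widehat{G}_i=(u^e-1)/G_i$, $z_iG_i+h_i\widehat{G}_i=1$, $\mu_i=h_i\widehat{G}_i$; these are pairwise orthogonal idempotents summing to $1$, and each $r\in R_{e,q}$ is uniquely $r=\sum_{i=1}^e s_i\mu_i$, $s_i\in\mathbb{F}_q$. The Gray map is $\varphi(r_0,\dots,r_{n-1})=(\boldsymbol{r_0}M,\dots,\boldsymbol{r_{n-1}}M)$ where $\boldsymbol{r_j}=(s_{j,1},\dots,s_{j,e})$ for $r_j=\sum_i s_{j,i}\mu_i$. A linear code is an $R_{e,q}$-submodule of $R_{e,q}^n$; $\mathcal{C}^\perp$ is taken with respect to the Euclidean inner product $x\cdot y=\sum_i x_iy_i$. Gray weight $w_G(r)=w_H(\varphi(r))$, Gray distance $d_G(c,c')=w_G(c-c')$, and $d_G$ of a code is the minimum over distinct codewords. *)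

(* Defs.v *)
From HB Require Import structures.
From mathcomp Require Import all_boot all_order all_algebra all_field.
Set Implicit Arguments. Unset Strict Implicit. Unset Printing Implicit Defensive.
Import GRing.Theory.
Local Open Scope ring_scope.

(* Elements of R_{e,q} = F[u]/<u^e - 1> are represented by their coefficient
   vectors in the basis 1, u, ..., u^(e-1), i.e. by 'rV[F]_e. *)
Section Ring.
Variables (F : finFieldType) (e : nat).

Definition modpoly : {poly F} := 'X^e - 1.

Definition poly_of (v : 'rV[F]_e) : {poly F} := \sum_(i < e) v 0 i *: 'X^i.

Definition rV_of (p : {poly F}) : 'rV[F]_e := \row_(i < e) (p %% modpoly)`_i.

Definition rmul (a b : 'rV[F]_e) : 'rV[F]_e := rV_of (poly_of a * poly_of b).

Definition Gpol (alpha : 'I_e -> F) (i : 'I_e) : {poly F} := 'X - (alpha i)%:P.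
Definition Ghat (alpha : 'I_e -> F) (i : 'I_e) : {poly F} := modpoly %/ Gpol alpha i.

Definition idem_decomp (alpha : 'I_e -> F) (mu : 'I_e -> 'rV[F]_e) : Prop :=
  forall i, exists z h : {poly F},
    z * Gpol alpha i + h * Ghat alpha i = 1 /\ mu i = rV_of (h * Ghat alpha i).

Definition coord (mu : 'I_e -> 'rV[F]_e) (r : 'rV[F]_e) : 'rV[F]_e :=
  odflt 0 [pick s : 'rV[F]_e | \sum_(i < e) s 0 i *: mu i == r].

Section Codes.
Variable n : nat.

(* a word of R^n: row j is the component r_j *)
Definition Rscale (r : 'rV[F]_e) (c : 'M[F]_(n, e)) : 'M[F]_(n, e) :=
  \matrix_(j < n) rmul r (row j c).

Definition Rlinear (C : {set 'M[F]_(n, e)}) : Prop :=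
  [/\ 0 \in C,
      (forall x y, x \in C -> y \in C -> x + y \in C) &
      (forall r x, x \in C -> Rscale r x \in C)].

Definition Rdot (x y : 'M[F]_(n, e)) : 'rV[F]_e := \sum_(j < n) rmul (row j x) (row j y).

Definition Rdual (C : {set 'M[F]_(n, e)}) : {set 'M[F]_(n, e)} :=
  [set y | [forall x in C, Rdot x y == 0]].

Definition gray (mu : 'I_e -> 'rV[F]_e) (M : 'M[F]_e) (c : 'M[F]_(n, e)) : 'rV[F]_(n * e) :=
  mxvec (\matrix_(j < n) (coord mu (row j c) *m M)).

Definition hamming (N : nat) (u v : 'rV[F]_N) : nat := #|[set i | u 0 i != v 0 i]|.

(* Gray distance of a code (minimum over distinct codewords; (n*e).+1 if none) *)
Definition dG mu M (C : {set 'M[F]_(n, e)}) : nat :=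
  \big[minn/(n * e).+1]_(x in C) \big[minn/(n * e).+1]_(y in C | y != x)
     hamming (gray mu M (x - y)) 0.

Definition dH (S : {set 'rV[F]_(n * e)}) : nat :=
  \big[minn/(n * e).+1]_(x in S) \big[minn/(n * e).+1]_(y in S | y != x) hamming x y.

Definition Fdual (S : {set 'rV[F]_(n * e)}) : {set 'rV[F]_(n * e)} :=
  [set v | [forall w in S, w *m v^T == 0]].

End Codes.
End Ring.

(* Main.v *)
Require Import Defs.
From HB Require Import structures.
From mathcomp Require Import all_boot all_order all_algebra all_field.
Set Implicit Arguments. Unset Strict Implicit. Unset Printing Implicit Defensive.
Import GRing.Theory.
Local Open Scope ring_scope.


Section Ev.
Variables (F : finFieldType) (e : nat) (alpha : 'I_e -> F) (mu : 'I_e -> 'rV[F]_e).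
Hypothesis e_gt0 : (0 < e)%N.
Hypothesis Hmod : modpoly F e = \prod_(i < e) ('X - (alpha i)%:P).
Hypothesis Hid : idem_decomp alpha mu.

Definition Vm : 'M[F]_e := \matrix_(k < e, i < e) alpha i ^+ k.

Lemma hornerV r i : (r *m Vm) 0 i = (poly_of r).[alpha i].
Proof.
rewrite !mxE /poly_of horner_sum; apply: eq_bigr => k _.
by rewrite hornerZ hornerXn mxE.
Qed.

Lemma mp_root i : (modpoly F e).[alpha i] = 0.
Proof. by rewrite Hmod horner_prod (bigD1 i) //= hornerXsubC subrr mul0r. Qed.

Lemma mp_size : size (modpoly F e) = e.+1.
Proof. by rewrite /modpoly -polyC1 size_XnsubC. Qed.

Lemma poly_of_rV p : poly_of (rV_of e p) = p %% modpoly F e.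
Proof.
rewrite /poly_of; under eq_bigr do rewrite mxE.
rewrite -poly_def; apply/polyP => k; rewrite coef_poly.
case: ltnP => // hk; rewrite nth_default //.
have := ltn_modp p (modpoly F e); rewrite mp_size.
have -> : modpoly F e != 0 by rewrite -size_poly_eq0 mp_size.
by move=> /= h; apply: leq_trans hk.
Qed.

Lemma rV_mulV p i : (rV_of e p *m Vm) 0 i = p.[alpha i].
Proof.
by rewrite hornerV poly_of_rV [in RHS](divp_eq p (modpoly F e)) hornerD hornerM
  mp_root mulr0 add0r.
Qed.

Lemma rmulV a b i : (rmul a b *m Vm) 0 i = (a *m Vm) 0 i * (b *m Vm) 0 i.
Proof. by rewrite /rmul rV_mulV hornerM !hornerV. Qed.

Lemma Ghat_prod i : Ghat alpha i = \prod_(j | j != i) ('X - (alpha j)%:P).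
Proof. by rewrite /Ghat Hmod (bigD1 i) //= mulKp // polyXsubC_eq0. Qed.

Lemma muV i j : (mu i *m Vm) 0 j = (i == j)%:R.
Proof.
have [z [h [Hb ->]]] := Hid i; rewrite rV_mulV.
case: eqP => [<-|/eqP nij].
  have := congr1 (fun p => p.[alpha i]) Hb.
  by rewrite /= hornerD !hornerM /Gpol hornerXsubC subrr mulr0 add0r hornerC.
by rewrite hornerM Ghat_prod horner_prod (bigD1 j) /= ?hornerXsubC ?subrr ?mul0r ?mulr0 // eq_sym.
Qed.

Definition Wm : 'M[F]_e := \matrix_(i < e) mu i.

Lemma WV : Wm *m Vm = 1%:M.
Proof.
apply/row_matrixP => i; rewrite row_mul rowK row1; apply/rowP => j.
by rewrite muV !mxE eq_sym.
Qed.
Lemma VW : Vm *m Wm = 1%:M. Proof. exact: mulmx1C WV. Qed.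
Lemma V_unit : Vm \in unitmx. Proof. by case: (mulmx1_unit WV). Qed.

Lemma sum_W (s : 'rV[F]_e) : \sum_(i < e) s 0 i *: mu i = s *m Wm.
Proof. by rewrite mulmx_sum_row; apply: eq_bigr => i _; rewrite rowK. Qed.

Lemma coordE r : Defs.coord mu r = r *m Vm.
Proof.
rewrite /Defs.coord; case: pickP => [s /eqP Hs | H] /=.
  by rewrite -Hs sum_W -mulmxA WV mulmx1.
have := H (r *m Vm); rewrite sum_W -mulmxA VW mulmx1 eqxx //.
Qed.

End Ev.


Lemma mxvec_dot (F : fieldType) m' n' (A B : 'M[F]_(m',n')) :
  mxvec A *m (mxvec B)^T = (\sum_i \sum_j A i j * B i j)%:M.
Proof.
apply/matrixP => i j; rewrite !ord1 !mxE eqxx mulr1n.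
rewrite (reindex _ (curry_mxvec_bij _ _)) /= pair_big /=.
by apply: eq_bigr => [[a b]] _ /=; rewrite mxE !mxvecE.
Qed.

Lemma sum_tr (F : fieldType) m' n' (A B : 'M[F]_(m',n')) :
  \sum_i \sum_j A i j * B i j = \tr (A *m B^T).
Proof.
rewrite /mxtrace; apply: eq_bigr => i _; rewrite mxE.
by apply: eq_bigr => j _; rewrite mxE.
Qed.

Section Gray.
Variables (F : finFieldType) (e : nat) (alpha : 'I_e -> F) (mu : 'I_e -> 'rV[F]_e).
Hypothesis e_gt0 : (0 < e)%N.
Hypothesis Hmod : modpoly F e = \prod_(i < e) ('X - (alpha i)%:P).
Hypothesis Hid : idem_decomp alpha mu.
Variables (n : nat) (M : 'M[F]_e) (gamma : F).
Hypothesis Munit : M \in unitmx.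
Hypothesis gamma0 : gamma != 0.
Hypothesis MMT : M *m M^T = gamma%:M.

Local Notation V := (Vm alpha).
Local Notation g := (gray mu M : 'M[F]_(n, e) -> _).

Lemma grayE c : g c = mxvec (c *m (V *m M)).
Proof.
rewrite /gray; congr mxvec; apply/row_matrixP => j.
by rewrite rowK (coordE e_gt0 Hmod Hid) !row_mul mulmxA.
Qed.

Lemma T_unit : V *m M \in unitmx.
Proof. by rewrite unitmx_mul (V_unit e_gt0 Hmod Hid) Munit. Qed.

Lemma grayB x y : g (x - y) = g x - g y.
Proof. by rewrite !grayE mulmxBl linearB. Qed.

Lemma grayD x y : g (x + y) = g x + g y.
Proof. by rewrite !grayE mulmxDl linearD. Qed.

Lemma grayZ a x : g (a *: x) = a *: g x.
Proof. by rewrite !grayE -scalemxAl linearZ. Qed.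

Lemma gray0 : g 0 = 0.
Proof. by rewrite grayE mul0mx linear0. Qed.

Lemma gray_inj : injective g.
Proof.
move=> x y; rewrite !grayE => /(can_inj mxvecK) H.
by rewrite -(mulmxK T_unit x) H mulmxK // T_unit.
Qed.

Lemma gray_surj v : exists y, v = g y.
Proof.
exists (vec_mx v *m invmx (V *m M)).
by rewrite grayE mulmxKV ?T_unit // vec_mxK.
Qed.

Lemma rowmulE m' p' (A : 'M[F]_(m', e)) (B : 'M[F]_(e, p')) j k :
  (row j A *m B) 0 k = (A *m B) j k.
Proof. by rewrite -row_mul mxE. Qed.

Lemma RscaleV r (x : 'M[F]_(n, e)) j k :
  (Rscale r x *m V) j k = (r *m V) 0 k * (x *m V) j k.
Proof. by rewrite -rowmulE rowK (rmulV e_gt0 Hmod) !rowmulE. Qed.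

Lemma RdotV (x y : 'M[F]_(n, e)) k :
  (Rdot x y *m V) 0 k = \sum_(j < n) (x *m V) j k * (y *m V) j k.
Proof.
rewrite /Rdot mulmx_suml summxE; apply: eq_bigr => j _.
by rewrite (rmulV e_gt0 Hmod) !rowmulE.
Qed.

Lemma Rdot0 (x y : 'M[F]_(n, e)) :
  (Rdot x y == 0) = [forall k, \sum_(j < n) (x *m V) j k * (y *m V) j k == 0].
Proof.
apply/eqP/forallP => [H k | H].
  by rewrite -RdotV H mul0mx mxE.
have H' : Rdot x y *m V = 0 by apply/rowP => k; rewrite RdotV mxE; apply/eqP.
by rewrite -(mulmxK (V_unit e_gt0 Hmod Hid) (Rdot x y)) H' mul0mx.
Qed.

Lemma gray_dot (x y : 'M[F]_(n, e)) : g x *m (g y)^T =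
  (gamma * \sum_(j < n) \sum_(k < e) (x *m V) j k * (y *m V) j k)%:M.
Proof.
rewrite !grayE mxvec_dot; congr (_%:M); rewrite !sum_tr.
rewrite !trmx_mul !mulmxA -(mulmxA (x *m V) M) MMT mul_mx_scalar -!scalemxAl.
by rewrite mxtraceZ -!mulmxA.
Qed.

End Gray.


HB.instance Definition _ := SemiGroup.isComLaw.Build nat minn minnA minnC.

Lemma card_rowspace (F : finFieldType) (N : nat) (S : 'M[F]_N) :
  #|[set v : 'rV_N | (v <= S)%MS]| = (#|F| ^ \rank S)%N.
Proof.
have -> : [set v : 'rV_N | (v <= S)%MS] =
    [set u *m row_base S | u in [set: 'rV_(\rank S)]].
  apply/setP => v; rewrite inE; apply/idP/imsetP.
    by rewrite -(eq_row_base S) => /submxP [u ->]; exists u; rewrite ?inE.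
  by move=> [u _ ->]; rewrite -(eq_row_base S) submxMl.
by rewrite card_imset ?cardsT ?card_mx ?mul1n //; apply: row_free_inj (row_base_free S).
Qed.

Unset Implicit Arguments.
Theorem theorem2p4 (F : finFieldType) (p m e t n k : nat)
  (alpha : 'I_e -> F) (mu : 'I_e -> 'rV[F]_e) (M : 'M[F]_e) (gamma : F)
  (C : {set 'M[F]_(n, e)}) :
  prime p -> odd p -> #|F| = (p ^ m)%N ->
  (2 <= e)%N -> (1 <= t)%N -> #|F| = (e * t + 1)%N ->
  modpoly F e = \prod_(i < e) ('X - (alpha i)%:P) ->
  idem_decomp alpha mu ->
  M \in unitmx -> gamma != 0 -> M *m M^T = gamma%:M ->
  Rlinear C -> #|C| = (#|F| ^ (e * k))%N ->
  [/\ (exists S : 'M[F]_(n * e), \rank S = (e * k)%N /\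
          gray mu M @: C = [set v | (v <= S)%MS]) /\
        dH (gray mu M @: C) = dG mu M C,
      gray mu M @: Rdual C = Fdual (gray mu M @: C),
      C \subset Rdual C -> gray mu M @: C \subset Fdual (gray mu M @: C)
    & Fdual (gray mu M @: C) = gray mu M @: C <-> Rdual C = C].
Proof.
move=> _ _ _ e2 t1 cardF Hmod Hid Munit g0 MMT [C0 CD CS] cardC.
have e_gt0 : (0 < e)%N by apply: leq_trans e2.
have ginj : injective (gray mu M : 'M[F]_(n, e) -> _) := gray_inj e_gt0 Hmod Hid Munit.
have gsurj := gray_surj (n := n) e_gt0 Hmod Hid Munit.
pose RV := RscaleV e_gt0 Hmod; pose R0 := Rdot0 e_gt0 Hmod Hid.
pose GD := gray_dot e_gt0 Hmod Hid MMT; pose MV := muV e_gt0 Hmod Hid.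
have CZ : forall a x, x \in C -> a *: x \in C.
  move=> a x xC; have -> : a *: x = Rscale (const_mx a *m Wm mu) x.
    apply: (can_inj (mulmxK (V_unit e_gt0 Hmod Hid))); apply/matrixP => j l.
    by rewrite RV -mulmxA (WV e_gt0 Hmod Hid) mulmx1 -scalemxAl !mxE.
  exact: CS.
have H2 : gray mu M @: Rdual C = Fdual (gray mu M @: C).
  apply/setP => v; have [y ->] := gsurj v; rewrite (mem_imset _ _ ginj).
  rewrite !inE; apply/forall_inP/forall_inP => [H w /imsetP [x xC ->] | H x xC].
    move: (H x xC); rewrite R0 => /forallP Hk.
    rewrite GD exchange_big big1 ?mulr0 => [|l _]; last exact/eqP/Hk.
    by apply/eqP/matrixP => a b; rewrite !mxE mul0rn.
  rewrite R0; apply/forallP => l.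
  have := H _ (imset_f (gray mu M) (CS (mu l) x xC)).
  rewrite GD => /eqP/matrixP/(_ 0 0); rewrite !mxE eqxx mulr1n => /eqP.
  rewrite mulf_eq0 (negbTE g0) /= => /eqP E; apply/eqP; rewrite -[RHS]E; apply: eq_bigr => j _.
  rewrite (bigD1 l) //= big1 ?addr0 => [|i il].
    by rewrite RV MV eqxx mul1r.
  by rewrite RV MV eq_sym (negbTE il) mul0r mul0r.
have Vz : 0 \in gray mu M @: C by rewrite -(@gray0 _ _ _ _ e_gt0 Hmod Hid n M) imset_f.
have VD : forall a b, a \in gray mu M @: C -> b \in gray mu M @: C -> a + b \in gray mu M @: C.
  move=> a b /imsetP [x xC ->] /imsetP [y yC ->].
  by rewrite -(grayD e_gt0 Hmod Hid) imset_f // CD.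
have VZ : forall a b, b \in gray mu M @: C -> a *: b \in gray mu M @: C.
  move=> a b /imsetP [x xC ->].
  by rewrite -(grayZ e_gt0 Hmod Hid) imset_f // CZ.
split.
- split.
    pose S := (\sum_(v in gray mu M @: C) <<v>>)%MS.
    have ES : gray mu M @: C = [set v | (v <= S)%MS].
      apply/setP => v; rewrite inE; apply/idP/idP.
        by move=> vin; apply: (sumsmx_sup v) => //; rewrite genmxE.
      move/sub_sumsmxP => [u ->]; apply: (big_ind (fun z => z \in gray mu M @: C)) => // w win.
      have : (u w *m <<w>>%MS <= w)%MS by rewrite (submx_trans (submxMl _ _)) ?genmxE.
      by move/sub_rVP => [a ->]; apply: VZ.
    exists S; split => //.
    have := card_rowspace S; rewrite -ES card_imset // cardC.
    have q1 : (1 < #|F|)%N by rewrite cardF; rewrite addn1 ltnS muln_gt0 t1 andbT; apply: leq_trans e2.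
    by move/(expnI q1).
  rewrite /dH /dG big_imset_idem; last exact: minnn.
  apply: eq_bigr => x xC.
  rewrite (eq_bigl (mem (gray mu M @: (C :\ x)))); last first.
    move=> w /=; have [y ->] := gsurj w.
    by rewrite !(mem_imset _ _ ginj) !inE (inj_eq ginj) andbC.
  rewrite big_imset_idem; last exact: minnn.
  rewrite (eq_bigl (mem (C :\ x))); last by move=> w; rewrite !inE andbC.
  apply: eq_bigr => y _; rewrite (grayB e_gt0 Hmod Hid) /hamming.
  by apply: eq_card => i; rewrite !inE !mxE subr_eq0.
- exact: H2.
- by move=> sub; rewrite -H2 imsetS.
- rewrite -H2; split => [|->] //; exact: imset_inj.
Qed.
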